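(* For every fixed priority order on the agents, the algorithm MaxMatch is a pseudomonotone $2$-rank-approximation algorithm for matching markets, and it is fully lex-truthfully implementable. MaxMatch: start with the empty matching $M$. For $r=1,2,\dots,m$: for every item $i$ not matched in $M$ such that some agent not matched in $M$ has $i$ among its top $r$ items, match $i$ to the highest-priority agent that is not matched in $M$ and has $i$ among its top $r$ items (updating $M$). Output $M$ after stage $m$.
   Context: Matching market: $n$ agents and $m$ items; each agent $j$ reports any strict total order $\succ_j$ on the items. An outcome is a matching of agents to items (each agent gets at most one item, each item at most one agent); an agent not matched gets the null item $\emptyset$, ranked below all items. Agents compare outcomes only through the item they receive. For a matching $M$ and profile $\succ$, $\mathrm{rank}_i(M;\succ)$ is the number of agents assigned one of their top-$i$ items, and $\mathrm{maxrank}_i(\succ)$ is its maximum over all matchings. A (possibly randomized) algorithm is an $\alpha$-rank-approximation algorithm if for every $\succ$ and every $i\in[m]$, $\mathbb{E}[\mathrm{rank}_i(\text{output};\succ)]\ge\mathrm{maxrank}_i(\succ)/\alpha$. A deterministic algorithm $f$ is pseudomonotone if for every agent $j$, every $\succ_{-j}$ and all $\succ_j,\succ'_j$, letting $a$ and $a'$ be the items (possibly $\emptyset$) assigned to $j$ by $f(\succ_j,\succ_{-j})$ and $f(\succ'_j,\succ_{-j})$: either $a\succeq_j a'$ (i.e. $a=a'$ or $a\succ_j a'$), or there is an item $b$ with $b\succ_j a'$ and the position of $b$ in $\succ_j$ is strictly smaller than its position in $\succ'_j$. For a randomized mechanism, each agent $j$ gets a distribution over items $\cup\{\emptyset\}$;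 a distribution $p$ lex-dominates $q\ne p$ w.r.t. $\succ_j$ if at the first element (in the order $\succ_j$, with $\emptyset$ last) where they differ, $p$ is larger. A randomized mechanism is lex-truthful if for all $j,\succ_j,\succ'_j,\succ_{-j}$, $j$'s item distribution under $(\succ_j,\succ_{-j})$ either equals or lex-dominates w.r.t. $\succ_j$ its item distribution under $(\succ'_j,\succ_{-j})$. A deterministic algorithm $f$ is fully lex-truthfully implementable if for every $\varepsilon>0$ there is a lex-truthful randomized mechanism $\mathcal{M}^\varepsilon$ with $\Pr[\mathcal{M}^\varepsilon(\succ)=f(\succ)]\ge1-\varepsilon$ for all profiles $\succ$. *)

(* Defs.v *)
From mathcomp Require Import all_boot all_order all_algebra all_fingroup.
From mathcomp Require Import reals.
Set Implicit Arguments. Unset Strict Implicit. Unset Printing Implicit Defensive.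
Import Order.TTheory GRing.Theory Num.Theory.

(* Agents are 'I_n, items are 'I_m.
   A preference of an agent is a permutation p : {perm 'I_m}; p a is the
   (0-based) position of item a in the agent's strict order (0 = best). *)
Definition pref (m : nat) := {perm 'I_m}.
Definition profile (n m : nat) := {ffun 'I_n -> pref m}.

(* An outcome assigns to each agent an item or the null item (None). *)
Definition outcome (n m : nat) := {ffun 'I_n -> option 'I_m}.

Definition is_matching n m (M : outcome n m) : bool :=
  [forall j, forall k, (j != k) ==> (M j != None) ==> (M j != M k)].

Definition in_top m (p : pref m) (i : nat) (a : 'I_m) : bool := p a < i.

Definition rank_i n m (i : nat) (M : outcome n m) (P : profile n m) : nat :=
  #|[set j | if M j is Some a then in_top (P j) i a else false]|.

Definition maxrank_i n m (i : nat) (P : profile n m) : nat :=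
  \max_(M : outcome n m | is_matching M) rank_i i M P.

Definition better m (p : pref m) (x y : option 'I_m) : bool :=
  match x, y with
  | Some a, Some b => p a < p b
  | Some _, None => true
  | None, _ => false
  end.

Definition weakly_better m (p : pref m) (x y : option 'I_m) : bool :=
  (x == y) || better p x y.

Definition upd n m (P : profile n m) (j : 'I_n) (q : pref m) : profile n m :=
  [ffun k => if k == j then q else P k].

Definition algorithm n m := profile n m -> outcome n m.

Definition pseudomonotone n m (f : algorithm n m) : Prop :=
  forall (j : 'I_n) (P : profile n m) (q : pref m),
    let a := f P j in
    let a' := f (upd P j q) j in
    weakly_better (P j) a a' \/
    exists b : 'I_m, better (P j) (Some b) a' /\ P j b < q b.

(* deterministic alpha = 2 rank approximation (expectation = value) *)
Definition two_rank_approx n m (f : algorithm n m) : Prop :=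
  forall (P : profile n m) (i : nat), 1 <= i <= m ->
    maxrank_i i P <= 2 * rank_i i (f P) P.

(* prio : {perm 'I_n}; prio j is the priority rank of agent j (0 = highest). *)

Definition item_matched n m (M : outcome n m) (i : 'I_m) : bool :=
  [exists j, M j == Some i].

Definition eligible n m (P : profile n m) (r : nat) (M : outcome n m)
  (i : 'I_m) (j : 'I_n) : bool :=
  (M j == None) && in_top (P j) r i.

Definition mm_step n m (prio : {perm 'I_n}) (P : profile n m) (r : nat)
  (M : outcome n m) (i : 'I_m) : outcome n m :=
  if item_matched M i then M else
  match [pick j | eligible P r M i j &&
                  [forall k, eligible P r M i k ==> (prio j <= prio k)]] with
  | Some j => [ffun k => if k == j then Some i else M k]
  | None => M
  end.

Definition mm_stage n m (prio : {perm 'I_n}) (P : profile n m) (M : outcome n m)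
  (r : nat) : outcome n m :=
  foldl (mm_step prio P r) M (enum 'I_m).

Definition maxmatch n m (prio : {perm 'I_n}) (P : profile n m) : outcome n m :=
  foldl (mm_stage prio P) [ffun _ => None] (iota 1 m).

Definition rmech (R : realType) n m := profile n m -> {ffun outcome n m -> R}.

Definition valid_rmech (R : realType) n m (D : rmech R n m) : Prop :=
  forall P : profile n m,
    (forall M, (0 <= D P M)%R) /\ ((\sum_M D P M)%R = 1%R) /\
    (forall M, ~~ is_matching M -> D P M = 0%R).

Definition item_dist (R : realType) n m (D : {ffun outcome n m -> R}) (j : 'I_n)
  (x : option 'I_m) : R :=
  (\sum_(M : outcome n m | M j == x) D M)%R.

Definition lex_dom (R : realType) m (pr : pref m) (p q : option 'I_m -> R) : Prop :=
  exists x, (q x < p x)%R /\ (forall y, better pr y x -> p y = q y).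

Definition lex_truthful (R : realType) n m (D : rmech R n m) : Prop :=
  forall (j : 'I_n) (P : profile n m) (q : pref m),
    let d := item_dist (D P) j in
    let d' := item_dist (D (upd P j q)) j in
    (forall x, d x = d' x) \/ lex_dom (P j) d d'.

Definition fully_lex_implementable (R : realType) n m (f : algorithm n m) : Prop :=
  forall eps : R, (0 < eps)%R ->
    exists D : rmech R n m,
      valid_rmech D /\ lex_truthful D /\
      forall P : profile n m, (1 - eps <= D P (f P))%R.

(* Main.v *)
Require Import Defs.
From mathcomp Require Import all_boot all_order all_algebra all_fingroup.
From mathcomp Require Import reals ring zify lra.
Set Implicit Arguments. Unset Strict Implicit. Unset Printing Implicit Defensive.

Definition best n (prio : {perm 'I_n}) (E : pred 'I_n) :=
  [pick l | E l && [forall k, E k ==> (prio l <= prio k)]].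

Lemma mm_step_best n m (prio : {perm 'I_n}) (P : profile n m) r M i :
  mm_step prio P r M i =
  if item_matched M i then M else
  match best prio (eligible P r M i) with
  | Some j => [ffun k => if k == j then Some i else M k]
  | None => M end.
Proof. by []. Qed.

Lemma best_some n (prio : {perm 'I_n}) E l : best prio E = Some l ->
  E l /\ forall k, E k -> prio l <= prio k.
Proof.
rewrite /best; case: pickP => // l' /andP[El /forallP H] [<-]; split => // k Ek.
exact: (implyP (H k)).
Qed.

Lemma best_none n (prio : {perm 'I_n}) E : best prio E = None -> forall k, ~~ E k.
Proof.
rewrite /best; case: pickP => // H _ k; apply/negP => Ek.
case: (arg_minnP (fun k => nat_of_ord (prio k)) Ek) => l El Hmin.
move: (H l); rewrite El /=; move/negP; apply; apply/forallP => k'; apply/implyP.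
exact: Hmin.
Qed.

Lemma best_eq n (prio : {perm 'I_n}) (E : pred 'I_n) l : E l ->
  (forall k, E k -> prio l <= prio k) -> best prio E = Some l.
Proof.
move=> El Hl; case B: (best prio E) => [l'|].
  have [El' Hl'] := best_some B; congr Some.
  apply: (@perm_inj _ prio); apply: val_inj; apply/eqP.
  by rewrite eqn_leq Hl' // Hl.
by move: (best_none B l); rewrite El.
Qed.

Lemma best_diff n (prio : {perm 'I_n}) (EA EB : pred 'I_n) j :
  (forall k, k != j -> EA k = EB k) ->
  best prio EA = best prio EB \/ best prio EA = Some j \/ best prio EB = Some j.
Proof.
move=> H.
case BA: (best prio EA) => [lA|]; case BB: (best prio EB) => [lB|].
- case: (eqVneq lA j) => [->|nA]; first by right; left.
  case: (eqVneq lB j) => [->|nB]; first by right; right.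
  left; have [EAl HA] := best_some BA; have [EBl HB] := best_some BB.
  congr Some; apply: (@perm_inj _ prio); apply: val_inj; apply/eqP.
  by rewrite eqn_leq HA ?H // HB // -H.
- case: (eqVneq lA j) => [->|nA]; first by right; left.
  have [EAl _] := best_some BA; by move: (best_none BB lA); rewrite -H ?EAl.
- case: (eqVneq lB j) => [->|nB]; first by right; right.
  have [EBl _] := best_some BB; by move: (best_none BA lB); rewrite H ?EBl.
- by left.
Qed.

Definition mono_out n m (M M' : outcome n m) :=
  forall l x, M l = Some x -> M' l = Some x.

Lemma mono_trans n m (M1 M2 M3 : outcome n m) :
  mono_out M1 M2 -> mono_out M2 M3 -> mono_out M1 M3.
Proof. by move=> h1 h2 l x /h1 /h2. Qed.

Lemma mono_none n m (M M' : outcome n m) l : mono_out M M' -> M' l = None -> M l = None.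
Proof. by move=> h; case E: (M l) => [x|] //; rewrite (h _ _ E). Qed.

Lemma mono_matched n m (M M' : outcome n m) x : mono_out M M' ->
  item_matched M x -> item_matched M' x.
Proof. by move=> h /existsP[l /eqP/h E]; apply/existsP; exists l; rewrite E. Qed.

Lemma mm_stepP n m (prio : {perm 'I_n}) (P : profile n m) r M i :
  mm_step prio P r M i = M \/
  exists l, [/\ ~~ item_matched M i, M l = None, P l i < r &
    mm_step prio P r M i = [ffun k => if k == l then Some i else M k]].
Proof.
rewrite mm_step_best; case: ifP => Hm; first by left.
case B: best => [l|]; last by left.
have [/andP[/eqP El Et] _] := best_some B.
by right; exists l; split => //; rewrite Hm.
Qed.

Lemma step_mono n m (prio : {perm 'I_n}) (P : profile n m) r M i :
  mono_out M (mm_step prio P r M i).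
Proof.
move=> l x Ml; case: (mm_stepP prio P r M i) => [->//|[l' [_ Ml' _ ->]]].
rewrite ffunE; case: eqP => // e; by rewrite e Ml' in Ml.
Qed.

Lemma foldl_mono T n m (f : outcome n m -> T -> outcome n m) :
  (forall M t, mono_out M (f M t)) -> forall s M, mono_out M (foldl f M s).
Proof.
move=> h; elim=> [|t s IH] M /=; first by [].
exact: mono_trans (h M t) (IH _).
Qed.

Lemma stage_mono n m (prio : {perm 'I_n}) (P : profile n m) M r :
  mono_out M (mm_stage prio P M r).
Proof. apply: foldl_mono; exact: step_mono. Qed.

Lemma run_mono n m (prio : {perm 'I_n}) (P : profile n m) s M :
  mono_out M (foldl (mm_stage prio P) M s).
Proof. apply: foldl_mono; exact: stage_mono. Qed.

Lemma step_matching n m (prio : {perm 'I_n}) (P : profile n m) r M i :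
  is_matching M -> is_matching (mm_step prio P r M i).
Proof.
move=> HM; case: (mm_stepP prio P r M i) => [->//|[l [Hm Ml _ ->]]].
apply/forallP => a; apply/forallP => b; apply/implyP => ab; apply/implyP.
rewrite !ffunE.
have nm : forall k, M k != Some i.
  by move=> k; apply/negP => /eqP e; move/negP: Hm; apply; apply/existsP; exists k; rewrite e.
case: (eqVneq a l) => [ea|na]; case: (eqVneq b l) => [eb|nb] //;
  try (by rewrite ea eb eqxx in ab); try (by move=> _; rewrite eq_sym; apply: nm);
  try (by move=> _; apply: nm).
move=> Ha; exact: (implyP (implyP (forallP (forallP HM a) b) ab) Ha).
Qed.

Lemma maxmatch_matching n m (prio : {perm 'I_n}) (P : profile n m) :
  is_matching (maxmatch prio P).
Proof.
rewrite /maxmatch.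
have: is_matching ([ffun _ => None] : outcome n m).
  by apply/forallP => a; apply/forallP => b; rewrite ffunE eqxx /= implybT.
elim: (iota 1 m) ([ffun _ => None] : outcome n m) => [|r s IH] M HM //=.
apply: IH; rewrite /mm_stage.
elim: (enum 'I_m) M HM => [|i s' IH'] M HM //=.
by apply: IH'; apply: step_matching.
Qed.

Definition maxP n m (P : profile n m) r (M : outcome n m) :=
  forall l x, M l = None -> P l x < r -> item_matched M x.
Definition topP n m (P : profile n m) r (M : outcome n m) :=
  forall l x, M l = Some x -> P l x < r.

Lemma step_max_i n m (prio : {perm 'I_n}) (P : profile n m) r M x l :
  mm_step prio P r M x l = None -> P l x < r -> item_matched (mm_step prio P r M x) x.
Proof.
rewrite mm_step_best; case: ifP => Hm //.
case B: best => [l0|] Hl Hx.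
  by apply/existsP; exists l0; rewrite ffunE eqxx.
by move: (best_none B l); rewrite /eligible Hl eqxx /in_top Hx.
Qed.

Lemma stage_max n m (prio : {perm 'I_n}) (P : profile n m) r M :
  maxP P r (mm_stage prio P M r).
Proof.
move=> l x; rewrite /mm_stage.
have : x \in enum 'I_m by rewrite mem_enum.
elim: (enum 'I_m) M => [|y s IH] M //= /[1!inE] /orP[/eqP ->|xs]; last exact: IH.
move=> Hl Hx.
have mo : mono_out (mm_step prio P r M y) (foldl (mm_step prio P r) (mm_step prio P r M y) s)
  := @foldl_mono _ n m _ (@step_mono n m prio P r) s _.
apply: (mono_matched mo); apply: (step_max_i _ Hx); exact: (mono_none mo Hl).
Qed.

Lemma step_top n m (prio : {perm 'I_n}) (P : profile n m) r M i :
  topP P r M -> topP P r (mm_step prio P r M i).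
Proof.
move=> HT l x; case: (mm_stepP prio P r M i) => [->|[l' [_ _ Hl' ->]]]; first exact: HT.
rewrite ffunE; case: eqP => [-> [<-] //|_]; exact: HT.
Qed.

Definition Mt n m (prio : {perm 'I_n}) (P : profile n m) t :=
  foldl (mm_stage prio P) [ffun _ => None] (iota 1 t).

Lemma Mt_succ n m (prio : {perm 'I_n}) (P : profile n m) t :
  Mt prio P t.+1 = mm_stage prio P (Mt prio P t) t.+1.
Proof. by rewrite /Mt -[t.+1]addn1 iotaD foldl_cat /= addnC. Qed.

Lemma Mt_max n m (prio : {perm 'I_n}) (P : profile n m) t : maxP P t (Mt prio P t).
Proof. case: t => [|t] l x //; rewrite Mt_succ; exact: stage_max. Qed.

Lemma Mt_top n m (prio : {perm 'I_n}) (P : profile n m) t : topP P t (Mt prio P t).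
Proof.
elim: t => [|t IH] l x; first by rewrite /Mt /= ffunE.
rewrite Mt_succ /mm_stage.
have : topP P t.+1 (Mt prio P t) by move=> l' x' /IH /ltnW.
elim: (enum 'I_m) (Mt prio P t) => [|y s IH'] M HM //=; first exact: HM.
by apply: IH'; apply: step_top.
Qed.

Lemma maxmatch_Mt n m (prio : {perm 'I_n}) (P : profile n m) i : i <= m ->
  mono_out (Mt prio P i) (maxmatch prio P).
Proof.
move=> im; have e : iota 1 m = iota 1 i ++ iota (1 + i) (m - i) by rewrite -iotaD subnKC.
rewrite /maxmatch e foldl_cat; exact: run_mono.
Qed.

Lemma two_approx n m (prio : {perm 'I_n}) : two_rank_approx (@maxmatch n m prio).
Proof.
move=> P i /andP[i1 im].
set Mi := Mt prio P i.
set A := [set l | Mi l != None].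
have rA : #|A| <= rank_i i (maxmatch prio P) P.
  apply: subset_leq_card; apply/subsetP => l; rewrite !inE.
  case E: (Mi l) => [x|] // _.
  by rewrite (maxmatch_Mt im E) /in_top (Mt_top E).
apply: leq_trans _ (leq_mul (leqnn 2) rA).
apply/bigmax_leqP => Ms HMs.
set B := [set j | if Ms j is Some a then in_top (P j) i a else false].
set C := [set l | [exists l', (l' \in A) && (Mi l' == Ms l)]].
pose h l' := odflt l' [pick l | (Ms l != None) && (Ms l == Mi l')].
have BAC : B \subset A :|: C.
  apply/subsetP => l; rewrite !inE.
  case E: (Ms l) => [x|] // Hx.
  case E2: (Mi l) => [y|] //=.
  have /existsP[l' /eqP Hl'] := Mt_max E2 Hx.
  by apply/existsP; exists l'; rewrite /A inE Hl' eqxx.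
have CA : C \subset h @: A.
  apply/subsetP => l; rewrite inE => /existsP[l' /andP[l'A /eqP e]].
  apply/imsetP; exists l' => //; rewrite /h.
  have MsN : Ms l != None by rewrite -e; rewrite inE in l'A.
  case: pickP => [l'' /andP[N'' /eqP e'']|H] /=.
    apply/eqP; apply/negPn/negP => ne.
    have := implyP (implyP (forallP (forallP HMs l) l'') ne) MsN.
    by rewrite e'' e eqxx.
  by move: (H l); rewrite MsN e eqxx.
have cC : #|C| <= #|A| := leq_trans (subset_leq_card CA) (leq_imset_card _ _).
rewrite /rank_i -/B mul2n -addnn.
apply: leq_trans (subset_leq_card BAC) _.
apply: leq_trans (leq_card_setU A C).1 _.
by rewrite leq_add2l.
Qed.

Lemma perm_pref m (p q : {perm 'I_m}) a0 :
  (forall b, p b < p a0 -> q b <= p b) -> p a0 <= q a0.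
Proof.
move=> H.
have E : forall t b, nat_of_ord (p b) = t -> t < p a0 -> q b = p b.
  elim/ltn_ind => t IH b pb tk.
  have : p b < p a0 by rewrite pb.
  move/H; rewrite leq_eqVlt => /orP[/eqP e|lt].
    by apply: val_inj.
  exfalso.
  pose y := (p^-1)%g (q b).
  have py : p y = q b by rewrite /y permKV.
  have h1 : p y < t by rewrite py -pb.
  have h2 : p y < p a0 by rewrite py (ltn_trans lt) // pb.
  have := IH (p y) h1 y erefl h2.
  rewrite py => /perm_inj yb.
  have pq : p b = q b by rewrite -py yb.
  by rewrite pq ltnn in lt.
rewrite leqNgt; apply/negP => lt.
pose y := (p^-1)%g (q a0).
have py : p y = q a0 by rewrite /y permKV.
have h3 : p y < p a0 by rewrite py.
have := E (p y) y erefl h3.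
rewrite py => /perm_inj ya.
have pq : p a0 = q a0 by rewrite -py ya.
by rewrite pq ltnn in lt.
Qed.

Definition Inv n m (P : profile n m) j a0 (MA MB : outcome n m) :=
  MA = MB \/ (exists i, MA j = Some i /\ P j i <= P j a0) \/
  (exists i, MB j = Some i /\ i != a0) \/ (exists l, l != j /\ MB l = Some a0).

Lemma Inv_mono n m (P : profile n m) j a0 (MA MB MA' MB' : outcome n m) :
  mono_out MA MA' -> mono_out MB MB' ->
  (exists i, MA j = Some i /\ P j i <= P j a0) \/
  (exists i, MB j = Some i /\ i != a0) \/ (exists l, l != j /\ MB l = Some a0) ->
  Inv P j a0 MA' MB'.
Proof.
move=> hA hB [[i [e h]]|[[i [e h]]|[l [h e]]]].
- by right; left; exists i; rewrite (hA _ _ e).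
- by right; right; left; exists i; rewrite (hB _ _ e).
- by right; right; right; exists l; rewrite (hB _ _ e).
Qed.

Lemma maxP_mono n m (P : profile n m) r (M M' : outcome n m) :
  mono_out M M' -> maxP P r M -> maxP P r M'.
Proof. by move=> h H l x /(mono_none h) e /(H _ _ e) /(mono_matched h). Qed.

Lemma pair_step n m (prio : {perm 'I_n}) (P : profile n m) j (q : pref m) a0 t M i :
  P j a0 <= q a0 -> maxP P t M ->
  Inv P j a0 (mm_step prio P t.+1 M i) (mm_step prio (upd P j q) t.+1 M i).
Proof.
move=> hq hmax.
set P' := upd P j q.
have monoB := @step_mono n m prio P' t.+1 M i.
have caseA : best prio (eligible P t.+1 M i) = Some j -> ~~ item_matched M i ->
    Inv P j a0 (mm_step prio P t.+1 M i) (mm_step prio P' t.+1 M i).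
  move=> BA Hm; have [/andP[/eqP Mj Ht] _] := best_some BA.
  have eA : mm_step prio P t.+1 M i j = Some i.
    by rewrite mm_step_best (negbTE Hm) BA ffunE eqxx.
  case: (leqP (P j i) (P j a0)) => h.
    by right; left; exists i.
  have /existsP[l /eqP Ml] := hmax j a0 Mj (leq_trans h Ht).
  right; right; right; exists l; split; last exact: monoB.
  by apply/eqP => e; rewrite e Mj in Ml.
case Hm: (item_matched M i).
  by left; rewrite !mm_step_best Hm.
have Hd : forall k, k != j -> eligible P t.+1 M i k = eligible P' t.+1 M i k.
  by move=> k kj; rewrite /eligible /in_top /P' /upd ffunE (negbTE kj).
have P'j : P' j = q by rewrite /P' /upd ffunE eqxx.
case: (best_diff prio Hd) => [e|[BA|BB]].
- by left; rewrite !mm_step_best Hm e.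
- by apply: caseA; rewrite ?Hm.
- have [/andP[/eqP Mj Ht] Hmin] := best_some BB.
  have eB : mm_step prio P' t.+1 M i j = Some i.
    by rewrite mm_step_best Hm BB ffunE eqxx.
  case: (eqVneq i a0) => [ei|ne]; last by right; right; left; exists i.
  apply: caseA; last by rewrite Hm.
  apply: best_eq.
    rewrite /eligible Mj eqxx /in_top /=; rewrite /in_top P'j ei in Ht.
    by rewrite ei; exact: leq_ltn_trans hq Ht.
  move=> k Ek; case: (eqVneq k j) => [->//|kj].
  by apply: Hmin; rewrite -Hd.
Qed.

Lemma pair_stage n m (prio : {perm 'I_n}) (P : profile n m) j (q : pref m) a0 t MA MB :
  P j a0 <= q a0 -> maxP P t MA -> Inv P j a0 MA MB ->
  Inv P j a0 (mm_stage prio P MA t.+1) (mm_stage prio (upd P j q) MB t.+1).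
Proof.
move=> hq; rewrite /mm_stage.
elim: (enum 'I_m) MA MB => [|i s IH] MA MB hmax hI //=.
apply: IH; first exact: (maxP_mono (@step_mono _ _ _ _ _ _ _) hmax).
case: hI => [<-|h]; first exact: pair_step.
exact: (Inv_mono (@step_mono _ _ _ _ _ _ _) (@step_mono _ _ _ _ _ _ _) h).
Qed.

Lemma pair_run n m (prio : {perm 'I_n}) (P : profile n m) j (q : pref m) a0 t :
  P j a0 <= q a0 -> Inv P j a0 (Mt prio P t) (Mt prio (upd P j q) t).
Proof.
move=> hq; elim: t => [|t IH]; first by left.
rewrite !Mt_succ; apply: pair_stage => //; exact: Mt_max.
Qed.

Lemma Mt_maxmatch n m (prio : {perm 'I_n}) (P : profile n m) :
  Mt prio P m = maxmatch prio P.
Proof. by []. Qed.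

Lemma pm_core n m (prio : {perm 'I_n}) (P : profile n m) j (q : pref m) a0 :
  P j a0 <= q a0 -> maxmatch prio (upd P j q) j = Some a0 ->
  weakly_better (P j) (maxmatch prio P j) (Some a0).
Proof.
move=> hq hB.
have := @pair_run n m prio P j q a0 m hq; rewrite !Mt_maxmatch.
case=> [e0|[[i [e h]]|[[i [e h]]|[l [h e]]]]].
- by rewrite e0 hB /weakly_better eqxx.
- rewrite e /weakly_better; case: (eqVneq i a0) => [->|ne]; first by rewrite eqxx.
  apply/orP; right; rewrite /= ltn_neqAle h andbT; apply/eqP => ee.
  have : P j i = P j a0 by apply: val_inj.
  by move/perm_inj => ei; rewrite ei eqxx in ne.
- by rewrite hB in e; case: e => e; rewrite e eqxx in h.
- have := implyP (implyP (forallP (forallP (maxmatch_matching prio (upd P j q)) l) j) h).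
  by rewrite e hB eqxx => /(_ isT).
Qed.

Lemma pseudomono n m (prio : {perm 'I_n}) : pseudomonotone (@maxmatch n m prio).
Proof.
move=> j P q /=.
case E: (maxmatch prio (upd P j q) j) => [a0|]; last first.
  by left; case: (maxmatch prio P j) => [x|]; rewrite /weakly_better /= ?orbT.
case: (boolP [exists b, (P j b < P j a0) && (P j b < q b)]) => [/existsP[b /andP[h1 h2]]|H].
  by right; exists b.
left; apply: pm_core E; apply: perm_pref => b hb.
rewrite leqNgt; apply/negP => hb2; move/negP: H; apply; apply/existsP; exists b.
by rewrite hb hb2.
Qed.
Import Order.TTheory GRing.Theory Num.Theory.
Local Open Scope ring_scope.

Definition single n m (k : 'I_n) (b : 'I_m) : outcome n m :=
  [ffun l => if l == k then Some b else None].
Definition empty_o n m : outcome n m := [ffun _ => None].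
Definition nu (R : realType) n m (t : nat) : R := (m - t)%:R / ((n * m * m).+1)%:R.
Definition Ssum (R : realType) n m (P : profile n m) : R :=
  \sum_(k : 'I_n) \sum_(b : 'I_m) nu R n m (P k b).
Definition gd (R : realType) n m (P : profile n m) (M : outcome n m) : R :=
  \sum_(k : 'I_n) \sum_(b : 'I_m) nu R n m (P k b) * (M == single k b)%:R
  + (1 - Ssum R P) * (M == empty_o n m)%:R.
Definition Dm (R : realType) n m (prio : {perm 'I_n}) (e : R) : rmech R n m :=
  fun P => [ffun M => (1 - e) * (M == maxmatch prio P)%:R + e * gd R P M].

Lemma sum_ind (R : realType) n m (pr : pred (outcome n m)) (M0 : outcome n m) :
  \sum_(M | pr M) (M == M0)%:R = (pr M0)%:R :> R.
Proof.
case: (boolP (pr M0)) => h.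
  rewrite (bigD1 M0) //= eqxx big1 ?addr0 // => M /andP[_ /negbTE ->] //.
rewrite big1 // => M HM; case: eqP => // e; by move: h; rewrite -e HM.
Qed.

Lemma sum_single (R : realType) n m (pr : pred (outcome n m)) (c : 'I_n -> 'I_m -> R) :
  \sum_(M | pr M) \sum_(k : 'I_n) \sum_(b : 'I_m) c k b * (M == single k b)%:R =
  \sum_(k : 'I_n) \sum_(b : 'I_m) c k b * (pr (single k b))%:R.
Proof.
rewrite exchange_big /=; apply: eq_bigr => k _.
rewrite exchange_big /=; apply: eq_bigr => b _.
by rewrite -mulr_sumr sum_ind.
Qed.

Lemma sum_gd (R : realType) n m (P : profile n m) (pr : pred (outcome n m)) :
  \sum_(M | pr M) gd R P M =
  \sum_(k : 'I_n) \sum_(b : 'I_m) nu R n m (P k b) * (pr (single k b))%:R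
  + (1 - Ssum R P) * (pr (empty_o n m))%:R.
Proof. by rewrite /gd big_split /= sum_single -mulr_sumr sum_ind. Qed.

Lemma nu_ge0 (R : realType) n m t : 0 <= nu R n m t.
Proof. by rewrite /nu divr_ge0 // ler0n. Qed.

Lemma Ssum_le1 (R : realType) n m (P : profile n m) : Ssum R P <= 1.
Proof.
have e : Ssum R P = (\sum_(k : 'I_n) \sum_(b : 'I_m) (m - P k b)%N)%:R / ((n * m * m).+1)%:R.
  rewrite natr_sum mulr_suml; apply: eq_bigr => k _.
  by rewrite natr_sum mulr_suml.
rewrite e ler_pdivrMr ?ltr0n // mul1r ler_nat.
apply: leq_trans (_ : \sum_(k : 'I_n) \sum_(b : 'I_m) m <= _)%N.
  by apply: leq_sum => k _; apply: leq_sum => b _; apply: leq_subr.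
rewrite (eq_bigr (fun _ => m * m)%N); last first.
  by move=> k _; rewrite sum_nat_const card_ord.
by rewrite sum_nat_const card_ord mulnA ltnW.
Qed.

Lemma gd_ge0 (R : realType) n m (P : profile n m) M : 0 <= gd R P M.
Proof.
rewrite /gd addr_ge0 //.
  apply: sumr_ge0 => k _; apply: sumr_ge0 => b _; apply: mulr_ge0 => //; exact: nu_ge0.
by apply: mulr_ge0 => //; rewrite subr_ge0 Ssum_le1.
Qed.

Lemma single_matching n m k b : is_matching (@single n m k b).
Proof.
apply/forallP => a; apply/forallP => a'; apply/implyP => ne; apply/implyP.
rewrite !ffunE; case: (eqVneq a k) => [ea|] //= _.
by case: (eqVneq a' k) => [ea'|//]; rewrite ea ea' eqxx in ne.
Qed.

Lemma empty_matching n m : is_matching (empty_o n m).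
Proof. by apply/forallP => a; apply/forallP => b; rewrite ffunE eqxx /= implybT. Qed.

Lemma dist_some (R : realType) n m (prio : {perm 'I_n}) (e : R) (P : profile n m) j y :
  item_dist (Dm prio e P) j (Some y) =
  (1 - e) * (maxmatch prio P j == Some y)%:R + e * nu R n m (P j y).
Proof.
rewrite /item_dist (eq_bigr _ (fun M _ => ffunE _ M)) big_split /=.
rewrite -!mulr_sumr (sum_ind _ (fun M : outcome n m => M j == Some y)) sum_gd.
congr (_ + _ * _).
rewrite ffunE /= mulr0 addr0.
rewrite (bigD1 j) //= [X in _ + X]big1 ?addr0; last first.
  move=> k kj; have jk : (j == k) = false by rewrite eq_sym (negbTE kj).
  by apply: big1 => b _; rewrite ffunE jk /= mulr0.
rewrite (bigD1 y) //= [X in _ + X]big1 ?addr0; last first.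
  by move=> b yb; rewrite ffunE eqxx /= (inj_eq (@Some_inj _)) (negbTE yb) mulr0.
by rewrite ffunE !eqxx mulr1.
Qed.

Lemma Dm_valid (R : realType) n m (prio : {perm 'I_n}) (e : R) :
  let D : rmech R n m := Dm prio e in
  0 <= e -> e <= 1 -> valid_rmech D.
Proof.
move=> D e0 e1 P; rewrite /D; split; [|split].
- by move=> M; rewrite ffunE addr_ge0 // mulr_ge0 // ?subr_ge0 ?gd_ge0.
- rewrite (eq_bigr _ (fun M _ => ffunE _ M)) big_split /= -!mulr_sumr.
  rewrite (sum_ind _ (fun _ => true)) (@sum_gd R n m P (fun _ => true)) /=.
  have -> : \sum_(k : 'I_n) \sum_(b : 'I_m) nu R n m (P k b) * 1 = Ssum R P.
    by apply: eq_bigr => k _; apply: eq_bigr => b _; rewrite mulr1.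
  ring.
- move=> M HM; rewrite ffunE.
  have h1 : (M == maxmatch prio P) = false.
    by apply/negP => /eqP eM; move: HM; rewrite eM maxmatch_matching.
  have h2 : (M == empty_o n m) = false.
    by apply/negP => /eqP eM; move: HM; rewrite eM empty_matching.
  rewrite h1 /gd h2 !mulr0 addr0 big1 ?mulr0 ?addr0 // => k _.
  apply: big1 => b _.
  have -> : (M == single k b) = false.
    by apply/negP => /eqP eM; move: HM; rewrite eM single_matching.
  by rewrite mulr0.
Qed.

Lemma Dm_f (R : realType) n m (prio : {perm 'I_n}) (e : R) (P : profile n m) :
  0 <= e -> 1 - e <= Dm prio e P (maxmatch prio P).
Proof.
move=> e0; rewrite ffunE eqxx mulr1 -{1}(addr0 (1 - e)) lerD //.
by rewrite mulr_ge0 // gd_ge0.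
Qed.

Lemma nu_lt (R : realType) n m t1 t2 : (t1 < t2)%N -> (t2 <= m)%N ->
  nu R n m t2 < nu R n m t1.
Proof.
move=> h1 h2; rewrite /nu ltr_pM2r ?invr_gt0 ?ltr0n // ltr_nat; lia.
Qed.

Lemma lexdom_at (R : realType) m (p : pref m) (d d' : option 'I_m -> R) (x : 'I_m) :
  d' (Some x) < d (Some x) ->
  (forall y : 'I_m, (p y < p x)%N -> d (Some y) = d' (Some y)) -> lex_dom p d d'.
Proof. by move=> h1 h2; exists (Some x); split => // [[y|]] //= h; apply: h2. Qed.

Lemma Dm_lex (R : realType) n m (prio : {perm 'I_n}) (e : R) :
  let D : rmech R n m := Dm prio e in
  0 < e -> e < 1 -> lex_truthful D.
Proof.
move=> D e0 e1 j P q d d'.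
set P' := upd P j q.
have P'j : P' j = q by rewrite /P' /upd ffunE eqxx.
case: (eqVneq q (P j)) => [eq|ne].
  left => x; rewrite /d /d'.
  have eP : upd P j q = P by apply/ffunP => k; rewrite !ffunE; case: eqP => // ->.
  by rewrite eP.
have [y1 hy1] : exists y, q y != P j y.
  case: (pickP (fun y => q y != P j y)) => [y hy|H]; first by exists y.
  by move/eqP: ne; case; apply/permP => y; move: (H y) => /negbFE /eqP.
case: (@arg_minnP _ y1 (fun y => q y != P j y) (fun y => nat_of_ord (P j y)) hy1) => y0 hy0 hmin.
have above : forall y, (P j y < P j y0)%N -> q y = P j y.
  move=> y hy; case: (eqVneq (q y) (P j y)) => // ne'.
  by move: (hmin y ne'); rewrite leqNgt hy.
have lt0 : (P j y0 < q y0)%N.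
  rewrite ltn_neqAle perm_pref ?andbT; last by move=> b /above ->.
  by apply/eqP => h; move/eqP: hy0; apply; apply: val_inj.
set a := maxmatch prio P j; set a' := maxmatch prio P' j.
have Hd : forall y, d (Some y) = (1 - e) * (a == Some y)%:R + e * nu R n m (P j y).
  by move=> y; rewrite /d /D dist_some.
have Hd' : forall y, d' (Some y) = (1 - e) * (a' == Some y)%:R + e * nu R n m (q y).
  by move=> y; rewrite /d' /D dist_some P'j.
have e1' : 0 <= 1 - e by rewrite subr_ge0 ltW.
have at_y0 : (forall y, (P j y < P j y0)%N -> (a == Some y) = (a' == Some y)) ->
    ((a' == Some y0) ==> (a == Some y0)) -> lex_dom (P j) d d'.
  move=> H1 H2; apply: (@lexdom_at _ _ _ _ _ y0).
    rewrite Hd Hd'; apply: ler_ltD.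
      apply: ler_wpM2l => //; rewrite ler_nat.
      by move: H2; case: (a' == Some y0); case: (a == Some y0).
    by rewrite ltr_pM2l // nu_lt // ltnW.
  by move=> y hy; rewrite Hd Hd' (H1 y hy) above.
have at_z : forall z, a = Some z -> (P j z < P j y0)%N ->
    (forall y, (P j y <= P j z)%N -> a' != Some y) -> lex_dom (P j) d d'.
  move=> z ez hz H; apply: (@lexdom_at _ _ _ _ _ z).
    rewrite Hd Hd' above // ez eqxx (negbTE (H z (leqnn _))) mulr0 mulr1 add0r.
    by rewrite -[X in X < _]add0r ltr_leD // subr_gt0.
  move=> y hy; rewrite Hd Hd' above ?(ltn_trans hy) // (negbTE (H y (ltnW hy))).
  have -> : (a == Some y) = false.
    by rewrite ez; apply/eqP => [[e']]; rewrite e' ltnn in hy.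
  by [].
right.
case: (eqVneq a a') => [eaa|naa].
  by apply: at_y0 => [y _|]; rewrite eaa // implybb.
case Bt: (better (P j) a a').
  case Ea: a Bt => [z|] // Bt.
  case: (ltnP (P j z) (P j y0)) => hz.
    apply: (at_z z Ea hz) => y hy; apply/eqP => ea'.
    by move: Bt; rewrite ea' /= ltnNge hy.
  apply: at_y0.
    move=> y hy.
    have -> : (a == Some y) = false.
      by rewrite Ea; apply/eqP => [[ez]]; move: hy; rewrite -ez ltnNge hz.
    apply/esym/eqP => ea'; move: Bt; rewrite ea' /= => h.
    by move: (leq_ltn_trans hz (ltn_trans h hy)); rewrite ltnn.
  apply/implyP => /eqP ea'; move: Bt; rewrite ea' /= => h.
  by move: (leq_ltn_trans hz h); rewrite ltnn.
case: (pseudomono prio j P q) => /= [wb|[b [hb1 hb2]]].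
  by move: wb; rewrite /weakly_better -/a -/P' -/a' (negbTE naa) Bt.
rewrite -/P' -/a' in hb1.
have hb : (P j y0 <= P j b)%N.
  rewrite leqNgt; apply/negP => h; move: hb2; rewrite above // ltnn.
  by [].
apply: at_y0.
  move=> y hy.
  have -> : (a' == Some y) = false.
    apply/eqP => ea'; move: hb1; rewrite ea' /= => h.
    by move: (ltn_trans h (leq_trans hy hb)); rewrite ltnn.
  apply/eqP => ea; move: Bt hb1; rewrite ea; case Ea': a' => [w|] //= Bt h.
  by rewrite (ltn_trans (leq_trans hy hb) h) in Bt.
apply/implyP => /eqP ea'; move: hb1; rewrite ea' /= => h.
by move: (leq_ltn_trans hb h); rewrite ltnn.
Qed.

Theorem theorem6 (R : realType) (n m : nat) (prio : {perm 'I_n}) :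
  (forall P : profile n m, is_matching (maxmatch prio P)) /\
  pseudomonotone (@maxmatch n m prio) /\
  two_rank_approx (@maxmatch n m prio) /\
  fully_lex_implementable R (@maxmatch n m prio).
Proof.
split; first by move=> P; apply: maxmatch_matching.
split; first exact: pseudomono.
split; first exact: two_approx.
move=> eps eps0.
pose e := Num.min eps 2^-1.
have e0 : 0 < e by rewrite lt_min eps0 invr_gt0 ltr0n.
have ee : e <= eps by rewrite ge_min lexx.
have eh : e <= 2^-1 by rewrite ge_min lexx orbT.
have e1 : e < 1 by lra.
exists (Dm prio e); split; first exact: Dm_valid (ltW e0) (ltW e1).
split; first exact: Dm_lex.
move=> P; apply: le_trans (Dm_f _ _ (ltW e0)); lra.
Qed.
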